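(* Let $M=\begin{pmatrix}a&b\\c&d\end{pmatrix}\in\mathrm{Mat}(2,\mathbb{Z})$ with $\mathrm{mgcd}(M)=r\neq0$. Then for all integers $n\ge2$, the reduction of $M$ mod $n$ is $\mathrm{Mat}(2,\mathbb{Z}_n)^\times$-conjugate to the reduction mod $n$ of the integer matrix $\begin{pmatrix}a&bc/r\\ r&d\end{pmatrix}$.
   Context: $\mathrm{mgcd}(M)=\gcd(b,c,d-a)\ge0$. $\mathbb{Z}_n=\mathbb{Z}/n\mathbb{Z}$ and $\mathrm{Mat}(2,\mathbb{Z}_n)^\times$ is the group of invertible $2\times2$ matrices over $\mathbb{Z}_n$. *)

(* Defs.v *)
From mathcomp Require Import all_boot all_order all_algebra.
Set Implicit Arguments. Unset Strict Implicit. Unset Printing Implicit Defensive.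
Import GRing.Theory Num.Theory.
Local Open Scope ring_scope.

Definition mx22 (a b c d : int) : 'M[int]_2 :=
  \matrix_(i < 2, j < 2)
    if i == 0 :> nat then (if j == 0 :> nat then a else b)
    else (if j == 0 :> nat then c else d).

Definition mgcd (M : 'M[int]_2) : int :=
  gcdz (gcdz (M 0 1) (M 1 0)) (M 1 1 - M 0 0).

(* Entrywise reduction of an integer matrix modulo n (meaningful for n >= 2). *)
Definition red_mod (n : nat) (M : 'M[int]_2) : 'M['Z_n]_2 :=
  map_mx (fun x : int => x%:~R) M.

Definition GL2_conj (R : comUnitRingType) (A B : 'M[R]_2) : Prop :=
  exists P : 'M[R]_2, P \in unitmx /\ P *m A *m invmx P = B.

(* Main.v *)
Require Import Defs.
From mathcomp Require Import all_boot all_order all_algebra.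
From mathcomp Require Import ring.
Import GRing.Theory Num.Theory.
Local Open Scope ring_scope.
Lemma dvd_prod_primes (p : nat) (P : pred nat) (s : seq nat) :
  prime p -> all prime s ->
  (p %| \prod_(q <- s | P q) q)%N = has (fun q => P q && (q == p)) s.
Proof.
move=> pp; elim: s => [|q s IH] /=.
  by rewrite big_nil dvdn1; case: eqP pp => // ->.
case/andP=> pq /IH {}IH; rewrite big_cons.
case: (P q) => /=; last exact: IH.
by rewrite Euclid_dvdM // dvdn_prime2 // IH eq_sym.
Qed.

Lemma quad_nz (F : fieldType) (B C E X Y : F) :
  ~~ [&& B == 0, C == 0 & E == 0] ->
  (C != 0 -> Y = 0 /\ X != 0) ->
  (C == 0 -> B != 0 -> X = 0 /\ Y != 0) ->
  (C == 0 -> B == 0 -> X != 0 /\ Y != 0) ->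
  C * X ^+ 2 + E * X * Y - B * Y ^+ 2 != 0.
Proof.
move=> H h1 h2 h3; have [C0|C0] := eqVneq C 0.
  have [B0|B0] := eqVneq B 0.
    have [X0 Y0] := h3 (introT eqP C0) (introT eqP B0); rewrite C0 B0 mul0r mul0r add0r subr0.
    by rewrite !mulf_neq0 //; move: H; rewrite C0 B0 eqxx.
  have [-> Y0] := h2 (introT eqP C0) B0; rewrite C0 !(mul0r, mulr0) add0r sub0r oppr_eq0.
  by rewrite mulf_neq0 // expf_neq0.
have [-> X0] := h1 C0; rewrite !(mul0r, mulr0, expr0n) /= subr0 addr0.
by rewrite mulf_neq0 // expf_neq0.
Qed.

Lemma dvd_prod_primes_in (p : nat) (P : pred nat) (s : seq nat) :
  prime p -> all prime s -> p \in s ->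
  (p %| \prod_(q <- s | P q) q)%N = P p.
Proof.
move=> pp ps ins; rewrite dvd_prod_primes //.
apply/hasP/idP => [[q _ /andP[Pq /eqP <-]]//| Pp].
by exists p; rewrite ?Pp ?eqxx.
Qed.

Lemma quad_coprime (n : nat) (b c e : int) : (0 < n)%N ->
  (forall p, prime p -> (p %| n)%N ->
     ~~ [&& (p%:Z %| b)%Z, (p%:Z %| c)%Z & (p%:Z %| e)%Z]) ->
  exists x y : int, coprime n `|(c * x ^+ 2 + e * x * y - b * y ^+ 2)%R|.
Proof.
move=> n0 Hn.
pose Pc := fun q : nat => (q%:Z %| c)%Z.
pose Pb := fun q : nat => (q%:Z %| b)%Z.
exists (\prod_(q <- primes n | Pc q && ~~ Pb q) q)%:Z,
       (\prod_(q <- primes n | ~~ Pc q) q)%:Z.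
set x := (\prod_(q <- primes n | Pc q && ~~ Pb q) q)%N.
set y := (\prod_(q <- primes n | ~~ Pc q) q)%N.
set Q := (c * _ + _ - _)%R.
rewrite /coprime; have [//|g1] := eqVneq (gcdn n `|Q|) 1.
have g0 : (0 < gcdn n `|Q|)%N by rewrite gcdn_gt0 n0.
have g2 : (1 < gcdn n `|Q|)%N by rewrite ltn_neqAle eq_sym g1.
set g := gcdn _ _ in g0 g1 g2.
have pp := pdiv_prime g2; have pg := pdiv_dvd g.
set p := pdiv g in pp pg.
have pn : (p %| n)%N := dvdn_trans pg (dvdn_gcdl _ _).
have pQ : (p %| `|Q|)%N := dvdn_trans pg (dvdn_gcdr _ _).
have pin : p \in primes n by rewrite mem_primes pp n0 pn.
have key : forall z : int, (p%:Z %| z)%Z = (z%:~R == 0 :> 'F_p).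
  exact: (dvdz_pcharf (pchar_Fp pp)).
have /negP[] : (Q%:~R : 'F_p) != 0.
  rewrite /Q rmorphB rmorphD !rmorphM /=.
  idtac.
  have hx : ((x%:Z)%:~R == 0 :> 'F_p) = Pc p && ~~ Pb p.
    by rewrite -key dvdzE absz_nat /x dvd_prod_primes_in // all_prime_primes.
  have hy : ((y%:Z)%:~R == 0 :> 'F_p) = ~~ Pc p.
    by rewrite -key dvdzE absz_nat /y dvd_prod_primes_in // all_prime_primes.
  have hb : (b%:~R == 0 :> 'F_p) = Pb p by rewrite -key.
  have hc : (c%:~R == 0 :> 'F_p) = Pc p by rewrite -key.
  have he : (e%:~R == 0 :> 'F_p) = (p%:Z %| e)%Z by rewrite -key.
  apply: quad_nz.
  - by rewrite hb hc he; exact: Hn.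
  - by rewrite hc => nc; split; [apply/eqP; rewrite hy | rewrite hx (negbTE nc)].
  - by rewrite hc hb => pc nb; split; [apply/eqP; rewrite hx pc nb | rewrite hy pc].
  - by rewrite hc hb => pc pb; split; [rewrite hx pc pb | rewrite hy pc].
by rewrite -key dvdzE.
Qed.

Lemma det_mx22 (R : comNzRingType) (p q s t : R) :
  \det (\matrix_(i < 2, j < 2)
    if i == 0 :> nat then (if j == 0 :> nat then p else q)
    else (if j == 0 :> nat then s else t)) = p * t - q * s.
Proof.
rewrite (expand_det_row _ 0) !big_ord_recl !big_ord0 /cofactor !det_mx11 !mxE /=.
rewrite /bump /= expr0 expr1 mul1r mulN1r addr0 mulrN.
by [].
Qed.

Lemma unit_Zn_int n (D : int) : (1 < n)%N -> coprime n `|D| ->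
  (D%:~R : 'Z_n) \is a GRing.unit.
Proof.
move=> n1; case: D => k cD.
  by rewrite unitZpE.
by rewrite NegzE rmorphN unitrN unitZpE.
Qed.

Lemma conj_eq (a b c e r x y : int) :
  mx22 a (b * r) (c * r) (a + e * r) *m mx22 x (b * y) y (c * x + e * y) =
  mx22 x (b * y) y (c * x + e * y) *m mx22 a (r * b * c) r (a + e * r).
Proof.
apply/matrixP=> i j; case: i => [[|[|//]] Hi]; case: j => [[|[|//]] Hj];
  rewrite !mxE !big_ord_recl !big_ord0 !mxE /=; ring.
Qed.

Theorem proposition37 (a b c d : int) :
  mgcd (mx22 a b c d) != 0 ->
  forall n : nat, (2 <= n)%N ->
    GL2_conj (red_mod n (mx22 a b c d))
      (red_mod n (mx22 a ((b * c) %/ mgcd (mx22 a b c d))%Z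
                       (mgcd (mx22 a b c d)) d)).
Proof.
move=> r0 n n2.
have rE : mgcd (mx22 a b c d) = gcdz (gcdz b c) (d - a) by rewrite /mgcd !mxE.
move: r0; rewrite rE; set r := gcdz (gcdz b c) (d - a) => r0.
have rdef : r = gcdz (gcdz b c) (d - a) by [].
have r_ge0 : 0 <= r by [].
clearbody r.
have rb : (r %| b)%Z by rewrite rdef; exact: dvdz_trans (dvdz_gcdl _ _) (dvdz_gcdl _ _).
have rc : (r %| c)%Z by rewrite rdef; exact: dvdz_trans (dvdz_gcdl _ _) (dvdz_gcdr _ _).
have re : (r %| d - a)%Z by rewrite rdef; exact: dvdz_gcdr _ _.
have [b' Hb] : exists b', b = b' * r by exists (b %/ r)%Z; rewrite divzK.
have [c' Hc] : exists c', c = c' * r by exists (c %/ r)%Z; rewrite divzK.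
have [e' He] : exists e', d - a = e' * r by exists ((d - a) %/ r)%Z; rewrite divzK.
have g1 : gcdz (gcdz b' c') e' = 1.
  have : r = gcdz (gcdz b' c') e' * r.
    have ra := gez0_abs r_ge0.
    by rewrite {1}rdef Hb Hc He -ra -!mulz_gcdl ra.
  by rewrite -{1}[r]mul1r => /(mulIf r0).
have n0 : (0 < n)%N by apply: leq_trans n2.
have Hn : forall p, prime p -> (p %| n)%N ->
     ~~ [&& (p%:Z %| b')%Z, (p%:Z %| c')%Z & (p%:Z %| e')%Z].
  move=> p pp pn; apply/negP => /and3P[pb pc pe].
  have : (p%:Z %| gcdz (gcdz b' c') e')%Z by rewrite !dvdz_gcd pb pc pe.
  rewrite g1 dvdzE absz_nat dvdn1 => /eqP p1.
  by rewrite p1 in pp.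
have [x [y cop]] := @quad_coprime n b' c' e' n0 Hn.
have Hd : d = a + e' * r by rewrite -He addrC subrK.
have Hq : ((b * c) %/ r)%Z = r * b' * c'.
  rewrite Hb Hc -(mulzK (r * b' * c') r0); congr (_ %/ _)%Z; ring.
rewrite Hq Hb Hc Hd.
pose P := mx22 x (b' * y) y (c' * x + e' * y).
have HP := conj_eq a b' c' e' r x y.
have Pu : red_mod n P \in unitmx.
  rewrite unitmxE /red_mod det_map_mx /P /mx22 det_mx22.
  apply: unit_Zn_int => //.
  have -> : x * (c' * x + e' * y) - b' * y * y = c' * x ^+ 2 + e' * x * y - b' * y ^+ 2.
    by ring.
  exact: cop.
exists (invmx (red_mod n P)); split; first by rewrite unitmx_inv.
rewrite invmxK -mulmxA /red_mod -map_mxM HP map_mxM mulKmx //.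
Qed.
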